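(* Fix a TxnSP instance. The set of schedules obtained by applying the derivation rule to the $n!$ permutations of $J$ contains at least one optimal schedule, i.e. a schedule of minimum makespan among all schedules.
   Context: TxnSP instance: jobs $J=\{1,\dots,n\}$, identical machines $1,\dots,m$, lengths $L_\alpha>0$, symmetric binary conflict matrix $C$ with zero diagonal ($C_{\alpha\beta}=1$ iff $\alpha\neq\beta$ conflict). Insertion process: Start from some state, where each machine $\mu$ has a processing time $P_\mu$ (initially $0$ when empty). An instruction $(\alpha,\mu)$ appends a not-yet-placed job $\alpha$ at the end of machine $\mu$. It assigns $\alpha$ the start time $st(\alpha)$, defined as the least $t\ge P_\mu$ such that $[t,t+L_\alpha)$ is disjoint from $[st(\beta),ct(\beta))$ for every already placed job $\beta$ with $C_{\alpha\beta}=1$. It then sets the completion time $ct(\alpha)=st(\alpha)+L_\alpha$ and updates $P_\mu:=ct(\alpha)$. A schedule is the result (machine assignment, order, start/completion times) of applying, from the empty state, a list of instructions whose jobs are exactly $J$. Its makespan is $\max_\mu P_\mu$. Derivation rule: given a permutation $(\alpha_1,\dots,\alpha_n)$ of $J$, insert the jobs in this order, each into a machine with currently smallest processing time $P_\mu$, breaking ties by smallest machine index. *)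

(* Defs.v *)
From HB Require Import structures.
From mathcomp Require Import all_boot all_order all_algebra.
Set Implicit Arguments. Unset Strict Implicit. Unset Printing Implicit Defensive.
Import Order.TTheory GRing.Theory Num.Theory.
Local Open Scope ring_scope.

Section TxnSP.
Variables (R : realFieldType) (n m : nat).
Variable L : 'I_n -> R.                 (* job lengths *)
Variable C : 'I_n -> 'I_n -> bool.      (* conflict matrix *)

(* An instruction (alpha, mu): append job alpha at the end of machine mu. *)
Definition instr := ('I_n * 'I_m)%type.

Definition feasible (placed : seq 'I_n) (st : 'I_n -> R) (a : 'I_n) (t : R) :=
  forall b, b \in placed -> C a b ->
    ~ (exists x, t <= x < t + L a /\ st b <= x < st b + L b).

Definition is_start (placed : seq 'I_n) (P : 'I_m -> R) (st : 'I_n -> R)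
    (a : 'I_n) (mu : 'I_m) (t : R) :=
  [/\ P mu <= t, feasible placed st a t &
      forall t', P mu <= t' -> feasible placed st a t' -> t <= t'].

(* run ok I P st : applying the instruction list I from the empty state,
   each instruction satisfying the side condition [ok] w.r.t. the current
   processing times, yields processing times P and start times st
   (st is only meaningful on placed jobs). *)
Inductive run (ok : ('I_m -> R) -> instr -> Prop) :
    seq instr -> ('I_m -> R) -> ('I_n -> R) -> Prop :=
| run_nil : run ok [::] (fun _ => 0) (fun _ => 0)
| run_rcons I P st a mu t :
    run ok I P st ->
    a \notin map fst I ->
    ok P (a, mu) ->
    is_start (map fst I) P st a mu t ->
    run ok (rcons I (a, mu))
        (fun nu => if nu == mu then t + L a else P nu)
        (fun b => if b == a then t else st b).

Definition any_instr (P : 'I_m -> R) (i : instr) : Prop := True.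

Definition derive_instr (P : 'I_m -> R) (i : instr) : Prop :=
  forall nu, (P i.2 < P nu) || ((P i.2 == P nu) && (i.2 <= nu)%N).

Definition is_schedule (I : seq instr) (P : 'I_m -> R) (st : 'I_n -> R) :=
  perm_eq (map fst I) (enum 'I_n) /\ run any_instr I P st.

Definition derived_schedule (p : seq 'I_n) (I : seq instr)
    (P : 'I_m -> R) (st : 'I_n -> R) :=
  map fst I = p /\ run derive_instr I P st.

(* Makespan = max_mu P mu (processing times are nonnegative). *)
Definition makespan (P : 'I_m -> R) : R := \big[Num.max/0]_(mu < m) P mu.

End TxnSP.

(* Main.v *)
Require Import Defs.
From HB Require Import structures.
From mathcomp Require Import all_boot all_order all_algebra.
Set Implicit Arguments. Unset Strict Implicit. Unset Printing Implicit Defensive.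
Import Order.TTheory GRing.Theory Num.Theory.
Local Open Scope ring_scope.

Lemma seq_min (T : eqType) (r : rel T) : total r -> transitive r ->
  forall s : seq T, s != [::] -> exists2 x, x \in s & forall y, y \in s -> r x y.
Proof.
move=> tot tr; elim=> [//|a s IH] _.
have [->|sn] := eqVneq s [::].
  by exists a; rewrite ?mem_head // => y; rewrite inE => /eqP ->; case/orP: (tot a a).
have [x xs xmin] := IH sn.
case/orP: (tot a x) => hax.
  exists a; first exact: mem_head.
  move=> y; rewrite inE => /orP [/eqP ->|ys]; first by case/orP: (tot a a).
  exact: tr hax (xmin y ys).
exists x; first by rewrite inE xs orbT.
move=> y; rewrite inE => /orP [/eqP ->|ys]; [exact: hax | exact: xmin].
Qed.

Section S.
Variables (R : realFieldType) (n m : nat) (L : 'I_n -> R) (C : 'I_n -> 'I_n -> bool).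
Hypothesis Lpos : forall a, 0 < L a.
Hypothesis Csym : forall a b, C a b = C b a.

Lemma feasibleP placed (st : 'I_n -> R) a t :
  feasible L C placed st a t <->
  (forall b, b \in placed -> C a b -> t + L a <= st b \/ st b + L b <= t).
Proof.
split.
  move=> F b bp cab.
  case: (lerP (t + L a) (st b)) => h1; first by left.
  case: (lerP (st b + L b) t) => h2; first by right.
  exfalso; apply: (F b bp cab).
  case: (lerP t (st b)) => h3.
    exists (st b); rewrite h3 h1 lexx /= ltrDl Lpos; done.
  exists t; rewrite lexx h2 ltrDl Lpos /= (ltW h3); done.
move=> F b bp cab [x [/andP [h1 h2] /andP [h3 h4]]].
case: (F b bp cab) => h.
  by have := lt_le_trans h2 (le_trans h h3); rewrite ltxx.
by have := lt_le_trans h4 (le_trans h h1); rewrite ltxx.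
Qed.

Definition disj (st : 'I_n -> R) a b := st a + L a <= st b \/ st b + L b <= st a.

Lemma run_uniq ok (I : seq (instr n m)) P st :
  run L C ok I P st -> uniq (map fst I).
Proof.
elim=> [//|I0 P0 st0 a mu t _ IH ha _ _].
by rewrite map_rcons rcons_uniq ha IH.
Qed.

Lemma run_S ok (I : seq (instr n m)) P st :
  run L C ok I P st ->
  [/\ forall mu, 0 <= P mu,
      forall b mu, (b, mu) \in I -> 0 <= st b /\ st b + L b <= P mu &
      forall b mu c nu, (b, mu) \in I -> (c, nu) \in I -> b != c ->
        C b c || (mu == nu) -> disj st b c].
Proof.
elim=> [|I0 P0 st0 a mu t _ [H1 H2 H3] ha _ [hs hf hmin]].
  by split=> // *.
have notI : forall b nu, (b, nu) \in I0 -> b != a.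
  move=> b nu bI; apply/eqP=> eba; move: ha; rewrite -eba.
  by move/negP; apply; apply/mapP; exists (b, nu).
have tpos : 0 <= t by apply: le_trans (H1 mu) hs.
split.
- move=> nu; case: (nu == mu); last exact: H1.
  by apply: addr_ge0 => //; apply: ltW.
- move=> b nu; rewrite mem_rcons inE => /orP [/eqP [-> ->]|bI].
    by rewrite !eqxx; split.
  rewrite (negbTE (notI _ _ bI)); have [h1 h2] := H2 _ _ bI; split=> //.
  case: eqP => [enu|_ //]; subst nu.
  apply: le_trans h2 (le_trans hs _).
  by rewrite lerDl ltW.
- have key : forall c nu, (c, nu) \in I0 -> C a c || (mu == nu) -> disj (fun b => if b == a then t else st0 b) a c.
    move=> c nu cI h; rewrite /disj eqxx (negbTE (notI _ _ cI)).
    case/orP: h => [cac|/eqP enu].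
      have cm : c \in map fst I0 by apply/mapP; exists (c, nu).
      exact: (proj1 (feasibleP _ _ _ _)) hf c cm cac.
    subst nu; right; have [_ h2] := H2 _ _ cI; exact: le_trans h2 hs.
  move=> b mu1 c nu; rewrite !mem_rcons !inE.
  move=> /orP [/eqP [-> ->]|bI] /orP [/eqP [-> ->]|cI].
  + by rewrite eqxx.
  + by move=> _; apply: key.
  + move=> _; rewrite Csym eq_sym => h.
    by have := key _ _ bI h; rewrite /disj; case=> ?; [right|left].
  + move=> bc h; have := H3 _ _ _ _ bI cI bc h.
    by rewrite /disj (negbTE (notI _ _ bI)) (negbTE (notI _ _ cI)).
Qed.


Lemma exists_start placed (P : 'I_m -> R) (st : 'I_n -> R) a mu :
  exists t, is_start L C placed P st a mu t.
Proof.
pose good t := (P mu <= t) &&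
  all (fun b => C a b ==> ((t + L a <= st b) || (st b + L b <= t))) placed.
have goodP : forall t, good t -> P mu <= t /\ feasible L C placed st a t.
  move=> t /andP [h1 /allP h2]; split=> //; apply/feasibleP=> b bp cab.
  by have := h2 b bp; rewrite cab /= => /orP [?|?]; [left|right].
pose cands := P mu :: [seq st b + L b | b <- placed].
have totge : total (fun x y : R => y <= x) by move=> x y; rewrite orbC le_total.
have trge : transitive (fun x y : R => y <= x) by move=> x y z h1 h2; apply: le_trans h2 h1.
have totle : total (fun x y : R => x <= y) by move=> x y; rewrite le_total.
have trle : transitive (fun x y : R => x <= y) by move=> x y z; apply: le_trans.
have [tm tmc tmmax] := seq_min totge trge (isT : cands != [::]).
have gtm : good tm.
  apply/andP; split; first by apply: tmmax; exact: mem_head.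
  apply/allP=> b bp; apply/implyP=> _; apply/orP; right; apply: tmmax.
  by rewrite inE; apply/orP; right; apply/mapP; exists b.
have Gne : filter good cands != [::].
  apply/eqP=> e; have : tm \in filter good cands by rewrite mem_filter gtm tmc.
  by rewrite e.
have [t0 t0G t0min] := seq_min totle trle Gne.
move: t0G; rewrite mem_filter => /andP [gt0 t0c].
have [h1 h2] := goodP _ gt0.
exists t0; split=> // t' ht' ft'.
pose H := filter (fun c => c <= t') cands.
have Hne : H != [::].
  apply/eqP=> e; have : P mu \in H by rewrite mem_filter ht' mem_head.
  by rewrite e.
have [u uH umax] := seq_min totge trge Hne.
move: uH; rewrite mem_filter => /andP [ut' uc].
have gu : good u.
  apply/andP; split.
    by apply: umax; rewrite mem_filter ht' mem_head.
  apply/allP=> b bp; apply/implyP=> cab.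
  have := (proj1 (feasibleP _ _ _ _)) ft' b bp cab; case=> h.
    by rewrite (le_trans _ h) // lerD2r.
  apply/orP; right; apply: umax; rewrite mem_filter h /= inE; apply/orP; right.
  by apply/mapP; exists b.
apply: le_trans (t0min u _) ut'.
by rewrite mem_filter gu.
Qed.

Lemma exists_machine (P : 'I_m -> R) : (0 < m)%N ->
  exists mu : 'I_m, forall nu, (P mu < P nu) || ((P mu == P nu) && (mu <= nu)%N).
Proof.
move=> m0.
pose r := fun i j : 'I_m => (P i < P j) || ((P i == P j) && (i <= j)%N).
have tot : total r.
  move=> i j; rewrite /r; case: (ltgtP (P i) (P j)) => //= _; exact: leq_total.
have tr : transitive r.
  move=> j i k; rewrite /r => /orP [h1|/andP [/eqP e1 h1]] /orP [h2|/andP [/eqP e2 h2]].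
  - by rewrite (lt_trans h1 h2).
  - by rewrite -e2 h1.
  - by rewrite e1 h2.
  - by rewrite e1 e2 eqxx (leq_trans h1 h2) orbT.
have ne : enum 'I_m != [::].
  case: m m0 {r tot tr P} => // m' _; apply/eqP => /(congr1 (fun s => (ord0 \in s))).
  by rewrite mem_enum.
have [mu _ hmu] := seq_min tot tr ne.
by exists mu => nu; apply: hmu; rewrite mem_enum.
Qed.

Lemma derived_exists : (0 < m)%N -> forall q : seq 'I_n, uniq q ->
  exists (I : seq (instr n m)) P st, map fst I = q /\ run L C (@derive_instr R n m) I P st.
Proof.
move=> m0; elim/last_ind => [|q a IH].
  by move=> _; exists [::], (fun _ => 0), (fun _ => 0); split=> //; constructor.
rewrite rcons_uniq => /andP [aq uq].
have [I [P [st [eI rI]]]] := IH uq.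
have [mu hmu] := exists_machine P m0.
have [t ht] := exists_start (map fst I) P st a mu.
exists (rcons I (a, mu)), (fun nu => if nu == mu then t + L a else P nu),
  (fun b => if b == a then t else st b).
split; first by rewrite map_rcons eI.
by apply: run_rcons => //; rewrite eI.
Qed.


Lemma uniq_fst (s : seq (instr n m)) x y y' :
  uniq (map fst s) -> (x, y) \in s -> (x, y') \in s -> y = y'.
Proof.
elim: s => [//|[x0 y0] s IH] /= /andP [hn hu].
have nin : forall z, (x0, z) \in s -> False.
  by move=> z h; move/negP: hn; apply; apply/mapP; exists (x0, z).
rewrite !inE => /orP [/eqP [e1 e2]|h1] /orP [/eqP [e3 e4]|h2].
- by rewrite e2 e4.
- by exfalso; apply: (nin y'); rewrite -e1.
- by exfalso; apply: (nin y); rewrite -e3.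
- exact: IH.
Qed.

Lemma overlap (st : 'I_n -> R) b c x :
  st b <= x < st b + L b -> st c <= x < st c + L c -> ~ disj st b c.
Proof.
move=> /andP [h1 h2] /andP [h3 h4] [h|h].
  by have := lt_le_trans h2 (le_trans h h3); rewrite ltxx.
by have := lt_le_trans h4 (le_trans h h1); rewrite ltxx.
Qed.

Section Main.
Variables (I' : seq (instr n m)) (P' : 'I_m -> R) (st' : 'I_n -> R).
Hypothesis H1 : forall mu, 0 <= P' mu.
Hypothesis H2 : forall b mu, (b, mu) \in I' -> 0 <= st' b /\ st' b + L b <= P' mu.
Hypothesis H3 : forall b mu c nu, (b, mu) \in I' -> (c, nu) \in I' -> b != c ->
        C b c || (mu == nu) -> disj st' b c.
Hypothesis allin : forall b, exists mu, (b, mu) \in I'.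
Variable q : seq 'I_n.
Hypothesis qs : pairwise (fun a b => st' a <= st' b) q.

Lemma derived_inv I P st : run L C (@derive_instr R n m) I P st ->
  forall s, map fst I ++ s = q ->
  (forall b, b \in map fst I -> st b <= st' b) /\
  (forall nu, P nu = 0 \/ exists2 b, (b, nu) \in I & P nu = st b + L b).
Proof.
elim=> [|I0 P0 st0 a mu t rI IH ha hmu [hs hf hmin]] s.
  by move=> _; split=> // nu; left.
rewrite map_rcons cat_rcons => E.
have [IH1 IH2] := IH _ E.
have uI0 := run_uniq rI.
have before : forall b, b \in map fst I0 -> st' b <= st' a.
  move: qs; rewrite -E pairwise_cat => /and3P [/allrelP h _ _] b bI.
  by apply: h; rewrite ?mem_head.
have [ma maI] := allin a.
have [sa0 _] := H2 maI.
have bna : forall b, b \in map fst I0 -> b != a.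
  by move=> b bI; apply/eqP=> e; move: ha; rewrite -e bI.
have Pmu_le : P0 mu <= st' a.
  rewrite leNgt; apply/negP => lt.
  have hall : forall nu, st' a < P0 nu.
    move=> nu; case/orP: (hmu nu) => /= h; first exact: lt_trans lt h.
    by case/andP: h => /eqP <-.
  have ex : forall nu, exists b, (b, nu) \in I0 /\ P0 nu = st0 b + L b.
    move=> nu; case: (IH2 nu) => [e|[b bI e]]; last by exists b.
    by have := le_lt_trans sa0 (hall nu); rewrite e ltxx.
  have [f hf'] := fin_all_exists ex.
  have [g hg] := fin_all_exists (fun nu => allin (f nu)).
  have fI : forall nu, f nu \in map fst I0.
    by move=> nu; apply/mapP; exists (f nu, nu); [exact: (hf' nu).1|].
  have cont : forall nu, st' (f nu) <= st' a < st' (f nu) + L (f nu).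
    move=> nu; rewrite before //=; apply: lt_le_trans (hall nu) _.
    by rewrite (hf' nu).2 lerD2r IH1.
  have conta : st' a <= st' a < st' a + L a by rewrite lexx ltrDl Lpos.
  have ginj : injective g.
    move=> i j gij.
    have [e|ne] := eqVneq (f i) (f j).
      apply: (uniq_fst uI0 (hf' i).1); rewrite e; exact: (hf' j).1.
    exfalso; apply: (overlap (cont i) (cont j)).
    by apply: (H3 (hg i) (hg j) ne); rewrite gij eqxx orbT.
  have /codomP [nu enu] := injF_onto ginj ma.
  apply: (overlap (cont nu) conta).
  apply: (H3 (hg nu) maI (bna _ (fI nu))).
  by rewrite -enu eqxx orbT.
have feas : feasible L C (map fst I0) st0 a (st' a).
  apply/feasibleP => b bp cab; right.
  have [mb mbI] := allin b.
  have anb : a != b by rewrite eq_sym bna.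
  have := H3 maI mbI anb; rewrite cab => /(_ isT).
  case=> h.
    have := le_trans h (before _ bp); rewrite gerDl leNgt Lpos //.
  by apply: le_trans h; rewrite lerD2r IH1.
have tle : t <= st' a by apply: hmin.
split.
  move=> b; rewrite mem_rcons inE => /orP [/eqP ->|bI].
    by rewrite eqxx.
  by rewrite (negbTE (bna _ bI)); apply: IH1.
move=> nu; case: eqP => [->|_].
  by right; exists a; rewrite ?mem_rcons ?mem_head ?eqxx.
case: (IH2 nu) => [->|[b bI e]]; first by left.
right; exists b; first by rewrite mem_rcons inE bI orbT.
by rewrite e (negbTE (bna b _)) //; apply/mapP; exists (b, nu).
Qed.

End Main.

End S.

Lemma list_min (R : realFieldType) (T : eqType) (X : Type) (D : T -> X -> Prop)
  (v : X -> R) (ls : seq T) : ls != [::] -> (forall q, q \in ls -> exists x, D q x) ->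
  exists q0 x0, [/\ q0 \in ls, D q0 x0 &
     forall q, q \in ls -> exists x, D q x /\ v x0 <= v x].
Proof.
elim: ls => [//|a ls IH] _ hex.
have [xa Da] := hex a (mem_head _ _).
have [->|ne] := eqVneq ls [::].
  exists a, xa; split; rewrite ?mem_head //.
  by move=> q; rewrite inE => /eqP ->; exists xa.
have [q0 [x0 [q0in D0 hm]]] := IH ne (fun q h => hex q (mem_behead (s := a :: ls) h)).
case: (lerP (v xa) (v x0)) => h.
  exists a, xa; split; rewrite ?mem_head //.
  move=> q; rewrite inE => /orP [/eqP ->|qin]; first by exists xa.
  have [x [Dx hx]] := hm q qin; exists x; split=> //; exact: le_trans h hx.
exists q0, x0; split; first by rewrite inE q0in orbT.
  by [].
move=> q; rewrite inE => /orP [/eqP ->|qin]; last exact: hm.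
by exists xa; split=> //; apply: ltW.
Qed.

Theorem theorem6 (R : realFieldType) (n m : nat)
    (L : 'I_n -> R) (C : 'I_n -> 'I_n -> bool) :
  (0 < m)%N ->
  (forall a, 0 < L a) ->
  (forall a b, C a b = C b a) ->
  (forall a, C a a = false) ->
  exists p : seq 'I_n,
    perm_eq p (enum 'I_n) /\
    exists (I : seq (instr n m)) (P : 'I_m -> R) (st : 'I_n -> R),
      derived_schedule L C p I P st /\
      forall (I' : seq (instr n m)) (P' : 'I_m -> R) (st' : 'I_n -> R),
        is_schedule L C I' P' st' -> makespan P <= makespan P'.
Proof.
move=> m0 Lpos Csym _.
pose D := fun (q : seq 'I_n) (x : seq (instr n m) * ('I_m -> R) * ('I_n -> R)) =>
  derived_schedule L C q x.1.1 x.1.2 x.2.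
have hex : forall q, q \in permutations (enum 'I_n) -> exists x, D q x.
  move=> q; rewrite mem_permutations => pq.
  have uq : uniq q by rewrite (perm_uniq pq) enum_uniq.
  have [I [P [st [eI rI]]]] := derived_exists C (m := m) Lpos m0 uq.
  by exists (I, P, st).
have ne : permutations (enum 'I_n) != [::].
  apply/eqP=> e; have : enum 'I_n \in permutations (enum 'I_n).
    by rewrite mem_permutations.
  by rewrite e.
have [p0 [[[I0 P0] st0] [p0in D0 hm]]] :=
  list_min (fun x => makespan x.1.2) ne hex.
exists p0; split; first by rewrite -mem_permutations.
exists I0, P0, st0; split; first exact: D0.
move=> I' P' st' [pe rS].
have [H1 H2 H3] := run_S Lpos Csym rS.
have allin : forall b, exists mu, (b, mu) \in I'.
  move=> b; have : b \in map fst I' by rewrite (perm_mem pe) mem_enum.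
  by case/mapP => [[b' mu] bI /= ->]; exists mu.
pose q := sort (fun a b => st' a <= st' b) (enum 'I_n).
have qin : q \in permutations (enum 'I_n) by rewrite mem_permutations perm_sort.
have qs : pairwise (fun a b => st' a <= st' b) q.
  rewrite -sorted_pairwise; last by move=> x y z; apply: le_trans.
  by apply: sort_sorted => x y; apply: le_total.
have [[[I P] st] [[eI rI] hle]] := hm q qin.
have E : map fst I ++ [::] = q by rewrite cats0.
have [IH1 IH2] := derived_inv Lpos H2 H3 allin qs rI E.
apply: le_trans hle _ => /=.
have mp0 : 0 <= makespan P' by apply: bigmax_ge_id.
apply: bigmax_le => // nu _.
case: (IH2 nu) => /= [->|[b bI ->]] //.
have [mb mbI] := allin b.
have [_ h] := H2 _ _ mbI.
apply: le_trans (le_trans h (le_bigmax _ _ mb)).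
rewrite lerD2r; apply: IH1; apply/mapP; exists (b, nu) => //.
Qed.
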